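(* Let $k\ge1$, $G=(V,E)$ an inductively $k$-independent graph with $k$-independence ordering $v_1,\dots,v_n$, $f:2^V\to\mathbb{R}_{\ge0}$ monotone submodular with $f(\emptyset)=0$, and $\beta>0$. Let $w_1,\dots,w_n$ and $S_{\mathrm{out}}$ be produced by algorithm PD-MON (described in the context). Then $f(S_{\mathrm{out}})\ge\sum_{i=1}^n w_i$.
   Context: $N(v)$ is the neighbourhood of $v$ (excluding $v$); $G$ is inductively $k$-independent with $k$-independence ordering $v_1,\dots,v_n$ if for every $i$, $G[N(v_i)\cap\{v_i,\dots,v_n\}]$ has no independent set of size more than $k$. For $S\subseteq V$, $f_S(v)=f(S\cup\{v\})-f(S)$. Algorithm PD-MON (parameter $\beta>0$). Phase 1: start with $S=\emptyset$ (a stack) and $w_1=\dots=w_n=0$. For $i=1,\dots,n$: let $C_i=N(v_i)\cap S$ for the current $S$; if $f_S(v_i)>(1+\beta)\sum_{v_j\in C_i}w_j$, set $w_i=f_S(v_i)-\sum_{v_j\in C_i}w_j$ (with $S$ the set before insertion) and push $v_i$ onto $S$; otherwise leave $w_i=0$. Let $S_{\mathrm{end}}$ be $S$ at the end of Phase 1. Phase 2: with $S_{\mathrm{out}}=\emptyset$, pop vertices of $S_{\mathrm{end}}$ in reverse insertion order, adding a popped $v$ to $S_{\mathrm{out}}$ whenever $S_{\mathrm{out}}\cup\{v\}$ is independent. Output $S_{\mathrm{out}}$. *)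

(* Defs.v *)
From HB Require Import structures.
From mathcomp Require Import all_boot all_order all_algebra.
From mathcomp Require Import reals.
Set Implicit Arguments. Unset Strict Implicit. Unset Printing Implicit Defensive.
Import Order.TTheory GRing.Theory Num.Theory.
Local Open Scope ring_scope.

Section PDMON.
Variable V : finType.

Definition simple_graph (e : rel V) : Prop := symmetric e /\ irreflexive e.

Definition independent (e : rel V) (A : {set V}) : bool :=
  [forall x in A, forall y in A, ~~ e x y].

Definition is_ordering (vs : seq V) : Prop := uniq vs /\ forall v, v \in vs.

Definition inductively_k_independent (e : rel V) (k : nat) (vs : seq V) : Prop :=
  forall v : V, forall A : {set V},
    A \subset [set u | e v u & (index v vs <= index u vs)%N] ->
    independent e A -> (#|A| <= k)%N.

Variable R : realType.

Definition monotone (f : {set V} -> R) : Prop :=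
  forall A B : {set V}, A \subset B -> f A <= f B.
Definition submodular (f : {set V} -> R) : Prop :=
  forall A B : {set V}, f (A :|: B) + f (A :&: B) <= f A + f B.

Definition marg (f : {set V} -> R) (S : {set V}) (v : V) : R :=
  f (v |: S) - f S.

(* Phase 1 state: the stack (head = most recently pushed) and the weights *)
Definition phase1_step (e : rel V) (f : {set V} -> R) (beta : R)
    (st : seq V * (V -> R)) (v : V) : seq V * (V -> R) :=
  let: (stk, w) := st in
  let Sset := [set x in stk] in
  let sC := \sum_(u in [set x in stk | e v x]) w u in
  let m := marg f Sset v in
  if m > (1 + beta) * sC
  then (v :: stk, fun x => if x == v then m - sC else w x)
  else (stk, w).

Definition phase1 e f beta (vs : seq V) : seq V * (V -> R) :=
  foldl (phase1_step e f beta) ([::], fun _ => 0) vs.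

Definition pdmon_weights e f beta vs : V -> R := (phase1 e f beta vs).2.

(* Phase 2: pop in reverse insertion order (stack order) *)
Definition phase2_step (e : rel V) (Sout : {set V}) (v : V) : {set V} :=
  if independent e (v |: Sout) then v |: Sout else Sout.

Definition pdmon_out e f beta vs : {set V} :=
  foldl (phase2_step e) set0 (phase1 e f beta vs).1.

End PDMON.

(* Main.v *)
Require Import Defs.
From mathcomp Require Import all_boot all_order all_algebra.
From mathcomp Require Import reals.
From mathcomp Require Import lra.
Import Order.TTheory GRing.Theory Num.Theory.
Set Implicit Arguments. Unset Strict Implicit. Unset Printing Implicit Defensive.
Local Open Scope ring_scope.

Fixpoint good (V : finType) (R : realType) (e : rel V) (f : {set V} -> R)
   (w : V -> R) (s : seq V) : Prop :=
  match s with
  | [::] => True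
  | u :: s' => @good V R e f w s' /\ u \notin s' /\
      marg f [set x in s'] u = w u + \sum_(x in [set x in s' | e u x]) w x
  end.

Lemma good_ext (V : finType) (R : realType) (e : rel V) (f : {set V} -> R)
   (w w' : V -> R) (s : seq V) :
  (forall x, x \in s -> w' x = w x) -> good e f w s -> good e f w' s.
Proof.
elim: s => [//|u s IH] /= Hw [Hg [Hu Hm]]; split.
  by apply: IH => // x Hx; apply: Hw; rewrite inE Hx orbT.
split => //; rewrite Hm Hw ?inE ?eqxx //; congr (_ + _).
by apply: eq_bigr => x; rewrite inE => /andP [Hx _]; rewrite Hw // inE Hx orbT.
Qed.

Definition Inv (V : finType) (R : realType) (e : rel V) (f : {set V} -> R)
  (st : seq V * (V -> R)) : Prop :=
  good e f st.2 st.1 /\ (forall x, x \notin st.1 -> st.2 x = 0) /\ (forall x, 0 <= st.2 x).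

Lemma step_inv (V : finType) (R : realType) (e : rel V) (f : {set V} -> R) beta
  st v : 0 < beta -> Inv e f st -> v \notin st.1 ->
  Inv e f (phase1_step e f beta st v) /\
  {subset (phase1_step e f beta st v).1 <= v :: st.1}.
Proof.
case: st => stk w Hb [Hg [H0 Hn]] /= Hv; rewrite /phase1_step.
set sC := \sum_(u in _) _.
have HsC : 0 <= sC by apply: sumr_ge0 => x _.
case: ifP => Hm; last first.
  by split => //= x Hx; rewrite inE Hx orbT.
split; last by [].
split => /=.
  split; first by apply: (good_ext _ Hg) => x Hx; case: eqP => // Exv; rewrite -Exv Hx in Hv.
  split => //.
  rewrite eqxx; rewrite -/sC.
  have -> : \sum_(x in [set x in stk | e v x]) (if x == v then marg f [set x in stk] v - sC else w x) = sC.
    apply: eq_bigr => x; rewrite inE => /andP [Hx _]; case: eqP => // Exv.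
    by rewrite -Exv Hx in Hv.
  by rewrite subrK.
split.
  by move=> x; rewrite inE negb_or => /andP [/negbTE -> Hx]; apply: H0.
move=> x; case: eqP => _ //.
have := mulr_ge0 (ltW Hb) HsC.
move: Hm; rewrite mulrDl mul1r => Hm.
lra.
Qed.

Lemma fold_inv (V : finType) (R : realType) (e : rel V) (f : {set V} -> R) beta
  (vs : seq V) st : 0 < beta -> uniq vs -> Inv e f st ->
  (forall v, v \in vs -> v \notin st.1) ->
  Inv e f (foldl (phase1_step e f beta) st vs).
Proof.
move=> Hb; elim: vs st => [//|v vs IH] st /= /andP [Hv Hu] Hi Hd.
have [Hi' Hs] := step_inv Hb Hi (Hd v (mem_head _ _)).
apply: IH => // x Hx; apply/negP => /Hs; rewrite inE => /orP [/eqP Exv|Hx'].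
  by rewrite -Exv Hx in Hv.
by move: (Hd x); rewrite inE Hx orbT Hx' => /(_ isT).
Qed.

Definition below (V : finType) (s : seq V) (u : V) := drop (index u s).+1 s.

Lemma below_mem (V : finType) (s : seq V) u x : x \in below s u -> u \in s.
Proof.
rewrite /below => Hx; rewrite -index_mem; apply: contraTT Hx; rewrite -leqNgt => H.
by rewrite drop_oversize // ltnW // ltnS.
Qed.

Lemma below_cons (V : finType) (s : seq V) h u : u != h -> below (h :: s) u = below s u.
Proof. by rewrite /below /= eq_sym => /negbTE ->. Qed.

Lemma below_head (V : finType) (s : seq V) h : below (h :: s) h = s.
Proof. by rewrite /below /= eqxx drop0. Qed.

Lemma cover (V : finType) (e : rel V) (s : seq V) (O : {set V}) :
  simple_graph e -> uniq s -> independent e O ->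
  let O' := foldl (phase2_step e) O s in
  O \subset O' /\ O' \subset O :|: [set x in s] /\
  forall x, x \in s -> x \in O' \/ exists2 u, u \in O' & e u x && ((u \in O) || (x \in below s u)).
Proof.
move=> [Hsym Hirr]; elim: s O => [|h s IH] O /=.
  by move=> _ _; rewrite subxx; split => //; split => //; apply: subsetUl.
move=> /andP [Hh Hu] HO.
set O1 := phase2_step e O h.
have HO1 : independent e O1 by rewrite /O1 /phase2_step; case: ifP.
have sOO1 : O \subset O1 by rewrite /O1 /phase2_step; case: ifP => // _; apply: subsetUr.
have sO1 : O1 \subset h |: O by rewrite /O1 /phase2_step; case: ifP => // _; apply: subsetUr.
have [IH1 [IH2 IH3]] := IH O1 Hu HO1.
split; first exact: subset_trans IH1.
split.
  apply: (subset_trans IH2); apply/subsetP => x; rewrite !inE => /orP [/(subsetP sO1)|->].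
    by rewrite !inE => /orP [->|->]; rewrite ?orbT.
  by rewrite !orbT.
move=> x; rewrite inE => /orP [/eqP ->|Hx].
  case Hh1: (h \in O1); first by left; apply: (subsetP IH1).
  right.
  have Hni : ~~ independent e (h |: O).
    by apply: contraFN Hh1 => Hi; rewrite /O1 /phase2_step Hi setU11.
  move: Hni; rewrite /independent negb_forall => /existsP [a].
  rewrite negb_imply negb_forall => /andP [Ha /existsP [b]].
  rewrite negb_imply negbK => /andP [Hb Hab].
  move: Ha Hb; rewrite !inE => /orP [/eqP Ea|Ha] /orP [/eqP Eb|Hb].
  - by subst; rewrite Hirr in Hab.
  - by exists b; [apply: (subsetP IH1); apply: (subsetP sOO1) | rewrite Hsym -Ea Hab Hb].
  - by exists a; [apply: (subsetP IH1); apply: (subsetP sOO1) | rewrite -Eb Hab Ha].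
  - by move: HO => /forallP /(_ a) /implyP /(_ Ha) /forallP /(_ b) /implyP /(_ Hb); rewrite Hab.
case: (IH3 x Hx) => [H|[u Hu1 /andP [Heu Hor]]]; first by left.
right; exists u => //; rewrite Heu /=.
move: Hor => /orP [HuO1|Hb].
  move: (subsetP sO1 u HuO1); rewrite !inE => /orP [/eqP Eu|->//].
  by subst u; rewrite below_head Hx orbT.
have Hus := below_mem Hb.
have Huh : u != h by apply: contraNneq Hh => <-.
by rewrite below_cons // Hb orbT.
Qed.

Lemma telescope (V : finType) (R : realType) (e : rel V) (f : {set V} -> R) (w : V -> R) (s : seq V) (X : {set V}) :
  submodular f -> (forall A, 0 <= f A) -> good e f w s -> X \subset [set x in s] ->
  \sum_(u in X) (w u + \sum_(x in [set x in below s u | e u x]) w x) <= f X.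
Proof.
move=> Hsub Hpos; elim: s X => [|h s IH] X /=.
  move=> _ HX; have -> : X = set0.
    by apply/setP => x; rewrite inE; apply/negbTE/negP => /(subsetP HX); rewrite inE.
  by rewrite big_set0.
move=> [Hg [Hh Hm]] HX.
have HX' : X :\ h \subset [set x in s].
  apply/subsetP => x; rewrite !inE => /andP [Hxh /(subsetP HX)]; rewrite inE.
  by rewrite inE (negbTE Hxh).
have Heq : \sum_(u in X :\ h) (w u + \sum_(x in [set x in below (h :: s) u | e u x]) w x)
         = \sum_(u in X :\ h) (w u + \sum_(x in [set x in below s u | e u x]) w x).
  by apply: eq_bigr => u; rewrite !inE => /andP [Hu _]; rewrite below_cons.
case HhX: (h \in X); last first.
  have -> : X = X :\ h by apply/setP => x; rewrite !inE; case: eqP => // ->; rewrite HhX.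
  by rewrite Heq; apply: IH.
rewrite (big_setD1 h) //=.
rewrite Heq below_head.
have H1 := IH _ Hg HX'.
have Hs := Hsub X [set x in s].
have E1 : X :|: [set x in s] = h |: [set x in s].
  apply/setP => x; rewrite !inE; case: eqP => [->|Hxh]; first by rewrite HhX.
  by case Hx: (x \in X) => //=; move: (subsetP HX x Hx); rewrite !inE => /orP [/eqP //|->].
have E2 : X :&: [set x in s] = X :\ h.
  apply/setP => x; rewrite !inE; case: eqP => [->|Hxh]; first by rewrite (negbTE Hh) andbF.
  by case Hx: (x \in X) => //=; move: (subsetP HX x Hx); rewrite !inE => /orP [/eqP //|->].
rewrite E1 E2 in Hs.
move: Hm; rewrite /marg => Hm.
lra.
Qed.

Lemma good_uniq (V : finType) (R : realType) (e : rel V) (f : {set V} -> R) w s :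
  good e f w s -> uniq s.
Proof. by elim: s => [//|u s IH] /= [Hg [Hu _]]; rewrite Hu IH. Qed.

Lemma bool_bound (R : realType) (a b : bool) (y : R) : 0 <= y -> a || b -> y <= (a%:R + b%:R) * y.
Proof. by case: a; case: b => //= Hy _; rewrite ?add0r ?addr0 ?mul1r //; lra. Qed.

Theorem lemma3 (R : realType) (V : finType) (e : rel V) (k : nat)
  (vs : seq V) (f : {set V} -> R) (beta : R) :
  (1 <= k)%N ->
  simple_graph e ->
  is_ordering vs ->
  inductively_k_independent e k vs ->
  (forall A, 0 <= f A) ->
  monotone f -> submodular f -> f set0 = 0 ->
  0 < beta ->
  \sum_(v <- vs) pdmon_weights e f beta vs v <= f (pdmon_out e f beta vs).
Proof.
move=> _ Hsg [Huniq Hall] _ Hpos _ Hsub Hf0 Hb.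
rewrite /pdmon_weights /pdmon_out.
set st := phase1 e f beta vs.
have : Inv e f st.
  by rewrite /st /phase1; apply: fold_inv => //; split => //=; split.
move=> HI; clearbody st; case: st HI => s w [Hg [H0 Hn]] /=.
move: Hg H0 Hn => /= Hg H0 Hn.
have Hus := good_uniq Hg.
have Hi0 : independent e set0 by apply/forallP => x; rewrite inE.
have [_ [HSs Hcov]] := cover Hsg Hus Hi0.
move: HSs Hcov; set O := foldl _ set0 s => HSs Hcov.
rewrite set0U in HSs.
rewrite big_uniq //= (eq_bigl (fun _ => true)); last by move=> x; rewrite Hall.
set C := fun u => [set x0 in below s u | e u x0].
apply: (@le_trans _ _ (\sum_x \sum_(u in O) (((x == u)%:R + (x \in C u)%:R) * w x))).
  apply: ler_sum => x _.
  case Hxs: (x \in s); last first.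
    by rewrite H0 ?Hxs //; apply: sumr_ge0 => u _; rewrite mulr0.
  have Hge : forall u, 0 <= ((x == u)%:R + (x \in C u)%:R) * w x.
    by move=> u; apply: mulr_ge0 => //; apply: addr_ge0.
  case: (Hcov x Hxs) => [HxO | [u HuO /andP [Heu Hor]]].
    rewrite (bigD1 x) //=.
    have := @bool_bound R (x == x) (x \in C x) _ (Hn x); rewrite eqxx /= => /(_ isT).
    have : 0 <= \sum_(i in O | i != x) ((x == i)%:R + (x \in C i)%:R) * w x.
      by apply: sumr_ge0.
    lra.
  rewrite (bigD1 u) //=.
  rewrite inE /= in Hor.
  have HxC : x \in C u by rewrite /C inE Hor Heu.
  have := @bool_bound R (x == u) (x \in C u) _ (Hn x); rewrite HxC orbT => /(_ isT).
  have : 0 <= \sum_(i in O | i != u) ((x == i)%:R + (x \in C i)%:R) * w x.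
    by apply: sumr_ge0.
  lra.
rewrite exchange_big /=.
apply: (le_trans _ (telescope Hsub Hpos Hg HSs)).
rewrite le_eqVlt; apply/orP; left; apply/eqP.
apply: eq_bigr => u _.
rewrite (eq_bigr (fun x => (x == u)%:R * w x + (x \in C u)%:R * w x)); last first.
  by move=> x _; rewrite mulrDl.
rewrite big_split /=; congr (_ + _).
  rewrite (bigD1 u) //= eqxx mul1r big1 ?addr0 // => x /negbTE ->.
  by rewrite mul0r.
rewrite [RHS]big_mkcond; apply: eq_bigr => x _.
by rewrite /C; case: (x \in _); rewrite ?mul1r ?mul0r.
Qed.
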